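(* For every $\epsilon>0$ there exists $n_0$ such that for all $n\ge n_0$, $d_n \ge (1-\epsilon)\, n\, 2^{2^{n-1}}$.
   Context: A delta-matroid $(E,\mathcal F)$ consists of a finite ground set $E$ and a non-empty collection $\mathcal F$ of subsets of $E$ (the feasible sets) satisfying the symmetric exchange axiom: for all $X,Y\in\mathcal F$ and every $e\in X\triangle Y$ there exists $f\in X\triangle Y$ (possibly $f=e$) with $X\triangle\{e,f\}\in\mathcal F$. Let $d_n$ denote the number of labelled delta-matroids with ground set $[n]=\{1,\dots,n\}$, i.e. the number of collections $\mathcal F$ of subsets of $[n]$ such that $([n],\mathcal F)$ is a delta-matroid. *)

(* Defs.v *)
From mathcomp Require Import all_boot.
Set Implicit Arguments.
Unset Strict Implicit.
Unset Printing Implicit Defensive.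

Definition symdiff (T : finType) (A B : {set T}) : {set T} :=
  (A :\: B) :|: (B :\: A).

Definition is_delta_matroid (T : finType) (F : {set {set T}}) : bool :=
  (F != set0) &&
  [forall X in F, forall Y in F, forall e in symdiff X Y,
     exists f in symdiff X Y, symdiff X [set e; f] \in F].

Definition num_delta_matroids (n : nat) : nat :=
  #|[set F : {set {set 'I_n}} | is_delta_matroid F]|.

(* Main.v *)
Require Import Defs.
From Stdlib Require Import Reals Lra Lia.
From mathcomp Require all_boot zify.

Module Helpers.
Import all_boot zify.
Set Implicit Arguments.
Unset Strict Implicit.
Unset Printing Implicit Defensive.

Lemma in_symdiff (T : finType) (A B : {set T}) x :
  (x \in symdiff A B) = (x \in A) (+) (x \in B).
Proof. by rewrite /symdiff !inE; case: (x \in A); case: (x \in B). Qed.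

Lemma odd_symdiff (T : finType) (A B : {set T}) :
  odd #|symdiff A B| = odd #|A| (+) odd #|B|.
Proof.
rewrite /symdiff cardsU.
have -> : (A :\: B) :&: (B :\: A) = set0.
  by apply/setP => x; rewrite !inE; case: (x \in A); case: (x \in B).
rewrite cards0 subn0 -(cardsID B A) -(cardsID A B) setIC.
rewrite !oddD; case: (odd _); case: (odd _); case: (odd _) => //.
Qed.

Definition par (T : finType) (i : T) (X : {set T}) := odd #|X :\ i|.

Lemma parE (T : finType) (i : T) (X : {set T}) : par i X = odd #|X| (+) (i \in X).
Proof. by rewrite /par (cardsD1 i X) oddD; case: (i \in X); case: (odd _). Qed.

Lemma par_symdiff (T : finType) (i : T) (X Y : {set T}) :
  par i (symdiff X Y) = par i X (+) par i Y.
Proof.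
rewrite !parE odd_symdiff in_symdiff.
by case: (odd #|X|); case: (odd #|Y|); case: (i \in X); case: (i \in Y).
Qed.

Lemma par_pair (T : finType) (i e f : T) :
  par i [set e; f] = if e == f then i != e else (i == e) || (i == f).
Proof.
rewrite parE; case: (eqVneq e f) => [->|nef].
  by rewrite setUid cards1 !inE.
rewrite cards2 nef !inE /=; case: (i == e); case: (i == f) => //.
Qed.

Definition Bset (T : finType) (i : T) (b : bool) := [set X : {set T} | par i X == b].

Lemma dm_sup (T : finType) (i j : T) (b : bool) (F : {set {set T}}) :
  j != i -> Bset i b \subset F -> is_delta_matroid F.
Proof.
move=> nji sBF; apply/andP; split.
  apply/set0Pn; exists (if b then [set j] else set0); apply: (subsetP sBF).
  rewrite inE; case: b sBF => _; rewrite parE ?cards1 ?cards0 !inE //.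
  by rewrite [i == j]eq_sym (negbTE nji).
apply/forallP => X; apply/implyP => XF; apply/forallP => Y; apply/implyP => YF.
apply/forallP => e; apply/implyP => eD; apply/existsP.
set D := symdiff X Y in eD *.
have inB : forall f, f \in D -> par i (symdiff X [set e; f]) = b ->
    exists f, (f \in D) && (symdiff X [set e; f] \in F).
  move=> f fD pf; exists f; rewrite fD /=; apply: (subsetP sBF).
  by rewrite inE pf.
have Dcase : (forall f, f \in D -> (f == e) || (f == i)) ->
    exists f, (f \in D) && (symdiff X [set e; f] \in F).
  move=> hD; exists (if i \in D then i else e).
  have -> : [set e; if i \in D then i else e] = D.
    apply/setP => x; rewrite in_set2.
    case xD: (x \in D).
      have := hD x xD; case/orP => /eqP ex; rewrite ex in xD *; first by rewrite eqxx.
      by rewrite xD eqxx orbT.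
    apply/negbTE; apply/negP; case/orP => /eqP ex.
      by rewrite ex eD in xD.
    by move: ex; case iD: (i \in D) => ex; [rewrite ex iD in xD | rewrite ex eD in xD].
  have -> : symdiff X D = Y.
    by apply/setP => x; rewrite !in_symdiff; case: (x \in X); case: (x \in Y).
  by rewrite YF andbT; case iD: (i \in D).
case pX: (par i X == b).
  case ei: (e == i).
    apply: (inB e eD); rewrite par_symdiff par_pair eqxx eq_sym ei.
    by rewrite /= addbF; apply/eqP.
  case: (pickP (fun f0 => (f0 \in D) && (f0 != e) && (f0 != i))).
    move=> f0 /andP [/andP [f0D f0e] f0i]; apply: (inB f0 f0D).
    rewrite par_symdiff par_pair [e == f0]eq_sym (negbTE f0e) [i == e]eq_sym ei.
    rewrite [i == f0]eq_sym (negbTE f0i) /= addbF.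
    by apply/eqP.
  move=> none; apply: Dcase => f fD; move: (none f); rewrite fD /=.
  by case: (f == e); case: (f == i).
case ei: (e == i).
  case: (pickP (fun f0 => (f0 \in D) && (f0 != i))).
    move=> f0 /andP [f0D f0i]; apply: (inB f0 f0D).
    move/eqP: ei => ei; subst e.
    rewrite par_symdiff par_pair [i == f0]eq_sym (negbTE f0i) eqxx /=.
    by move: pX; case: (par i X); case: (b).
  move=> none; apply: Dcase => f fD; move: (none f); rewrite fD /=.
  by case: (f == i); rewrite ?orbT.
apply: (inB e eD); rewrite par_symdiff par_pair eqxx [i == e]eq_sym ei /=.
by move: pX; case: (par i X); case: (b).
Qed.

Lemma in_bigcup_seq (I : eqType) (U : finType) (s : seq I) (T : I -> {set U}) x :
  x \in \bigcup_(t <- s) T t -> exists2 t, t \in s & x \in T t.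
Proof.
elim: s => [|a s IH]; first by rewrite big_nil inE.
rewrite big_cons inE; case/orP => [xa|/IH [t ts xt]].
  by exists a; rewrite ?inE ?eqxx.
by exists t; rewrite ?inE ?ts ?orbT.
Qed.

Lemma card_bigcup_disj (I : eqType) (U : finType) (s : seq I) (T : I -> {set U}) :
  uniq s -> (forall a b, a \in s -> b \in s -> a != b -> T a :&: T b = set0) ->
  #|\bigcup_(t <- s) T t| = \sum_(t <- s) #|T t|.
Proof.
elim: s => [|a s IH]; first by rewrite !big_nil cards0.
move=> /= /andP [as_ us] hd.
rewrite !big_cons cardsU -IH //; last first.
  by move=> x y xs ys; apply: hd; rewrite inE ?xs ?ys orbT.
have -> : T a :&: \bigcup_(t <- s) T t = set0.
  apply/setP => x; rewrite inE [x \in set0]inE; apply/negbTE/negP.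
  case/andP => xa /in_bigcup_seq [t ts xt].
  have : x \in T a :&: T t by rewrite inE xa xt.
  rewrite hd ?inE ?eqxx ?ts ?orbT //.
  by apply/negP => /eqP at_; rewrite at_ ts in as_.
by rewrite cards0 subn0.
Qed.

Definition wid (m : nat) (i : 'I_m.+1) : 'I_m.+2 := widen_ord (leqnSn _) i.

Definition Z0 (m : nat) (i : 'I_m.+1) :=
  [set j : 'I_m.+2 | (wid i <= j) && (j < m.+1)].

Definition Zs (m : nat) (i : 'I_m.+1) (b : bool) :=
  if odd #|Z0 i| == b then Z0 i else ord_max |: Z0 i.

Lemma oddZ m (i : 'I_m.+1) b : odd #|Zs i b| = b.
Proof.
rewrite /Zs; case: eqP => // hne.
rewrite cardsU1 inE ltnn andbF /= .
by move: hne; case: (odd _); case: b.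
Qed.

Lemma memZ m (i j : 'I_m.+1) b : (wid j \in Zs i b) = (i <= j).
Proof.
have h : wid j \in Z0 i = (i <= j) by rewrite inE /= ltn_ord andbT.
rewrite /Zs; case: (_ == b) => //.
rewrite in_setU1 h; have -> : (wid j == ord_max) = false.
  by apply/negbTE; rewrite -val_eqE /= neq_ltn ltn_ord.
by [].
Qed.

Lemma parZ m (i j : 'I_m.+1) b : par (wid j) (Zs i b) = b (+) (i <= j).
Proof. by rewrite parE oddZ memZ. Qed.

Definition Tset m (i : 'I_m.+1) (b : bool) :=
  [set F : {set {set 'I_m.+2}} | (Bset (wid i) b \subset F) && (Zs i b \notin F)].

Lemma Z_sep m (i j : 'I_m.+1) b c : (i, b) != (j, c) ->
  (Zs i b \in Bset (wid j) c) || (Zs j c \in Bset (wid i) b).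
Proof.
rewrite !inE !parZ.
case: (ltngtP i j) => [lij|lji|eij].
  by move=> _; case: b; case: c.
- by move=> _; case: b; case: c.
- have eo : i = j by apply: val_inj.
  subst j; rewrite xpair_eqE eqxx /=.
  by case: b; case: c.
Qed.

Lemma T_disj m (i j : 'I_m.+1) b c : (i, b) != (j, c) ->
  Tset i b :&: Tset j c = set0.
Proof.
move=> hne; apply/setP => F; rewrite !inE; apply/negbTE/negP.
case/andP => /andP [sB nZ] /andP [sB' nZ'].
case/orP: (Z_sep hne) => h.
  by move/negP: nZ; apply; apply: (subsetP sB').
by move/negP: nZ'; apply; apply: (subsetP sB).
Qed.

Lemma T_dm m (i : 'I_m.+1) b F : F \in Tset i b -> is_delta_matroid F.
Proof.
rewrite inE => /andP [sB _]; apply: (@dm_sup _ (wid i) ord_max b F) => //.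
by rewrite -val_eqE /= neq_ltn ltn_ord orbT.
Qed.

Definition tog m (X : {set 'I_m.+2}) := symdiff X [set ord_max].

Lemma tog_inv m (X : {set 'I_m.+2}) : tog (tog X) = X.
Proof.
apply/setP => x; rewrite /tog !in_symdiff.
by case: (x \in X); case: (x \in [set ord_max]).
Qed.

Lemma par_tog m (i : 'I_m.+1) (X : {set 'I_m.+2}) : par (wid i) (tog X) = ~~ par (wid i) X.
Proof.
rewrite /tog par_symdiff [par _ [set _]]parE cards1 in_set1.
have -> : (wid i == ord_max) = false by apply/negbTE; rewrite -val_eqE /= neq_ltn ltn_ord.
by case: (par _ _).
Qed.

Lemma card_cB m (i : 'I_m.+1) b : #|~: Bset (wid i) b| = 2 ^ m.+1.
Proof.
have tinj : injective (@tog m) by apply: (can_inj (@tog_inv m)).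
have h1 : #|Bset (wid i) b| <= #|~: Bset (wid i) b|.
  rewrite -(card_imset _ tinj); apply: subset_leq_card; apply/subsetP => Y.
  case/imsetP => X; rewrite inE => /eqP hX ->; rewrite !inE par_tog hX.
  by case: (b).
have h2 : #|~: Bset (wid i) b| <= #|Bset (wid i) b|.
  rewrite -(card_imset _ tinj); apply: subset_leq_card; apply/subsetP => Y.
  case/imsetP => X => hX ->; rewrite inE par_tog.
  by move: hX; rewrite !inE; case: (par _ _); case: (b).
have := cardsC (Bset (wid i) b).
have -> : #|{set 'I_m.+2}| = 2 ^ m.+2.
  by rewrite -cardsT -powersetT card_powerset cardsT card_ord.
have -> : #|Bset (wid i) b| = #|~: Bset (wid i) b| by apply/eqP; rewrite eqn_leq h1 h2.
rewrite expnS mul2n -addnn; set k := #|_|; move=> h; lia.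
Qed.

Lemma card_T m (i : 'I_m.+1) b : 2 ^ (2 ^ m.+1 - 1) <= #|Tset i b|.
Proof.
set B := Bset (wid i) b.
set P := (~: B) :\ Zs i b.
have ZnB : Zs i b \in ~: B.
  by rewrite !inE parZ leqnn; case: (b).
have cP : #|P| = 2 ^ m.+1 - 1 by rewrite -(card_cB i b) [#|~: _|](cardsD1 (Zs i b)) ZnB add1n subn1.
rewrite -cP -card_powerset.
have finj : {in powerset P &, injective (fun A => B :|: A)}.
  move=> A1 A2; rewrite !inE => /subsetP s1 /subsetP s2 heq.
  apply/setP => x.
  case xB: (x \in B).
    case x1: (x \in A1); first by move: (s1 x x1); rewrite in_setD1 in_setC xB andbF.
    case x2: (x \in A2); first by move: (s2 x x2); rewrite in_setD1 in_setC xB andbF.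
    by [].
  by move/setP: heq => /(_ x); rewrite !in_setU xB.
rewrite -(card_in_imset finj); apply: subset_leq_card; apply/subsetP => F.
case/imsetP => A; rewrite inE => /subsetP sA ->.
rewrite inE subsetUl /= inE negb_or.
apply/andP; split; first by move: ZnB; rewrite inE.
by apply/negP => /sA; rewrite !inE eqxx.
Qed.

Lemma count_lb m : m.+1 * 2 ^ (2 ^ m.+1) <= num_delta_matroids m.+2.
Proof.
rewrite /num_delta_matroids.
set U := \bigcup_(t : 'I_m.+1 * bool) Tset t.1 t.2.
have sU : U \subset [set F : {set {set 'I_m.+2}} | is_delta_matroid F].
  apply/subsetP => F /bigcupP [t _ Ft]; rewrite inE; exact: (T_dm Ft).
apply: (leq_trans _ (subset_leq_card sU)).
have -> : #|U| = \sum_(t : 'I_m.+1 * bool) #|Tset t.1 t.2|.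
  rewrite /U card_bigcup_disj ?index_enum_uniq //.
  by move=> [i b] [j c] _ _ hne; apply: T_disj.
apply: (@leq_trans (\sum_(t : 'I_m.+1 * bool) 2 ^ (2 ^ m.+1 - 1))); last first.
  by apply: leq_sum => t _; apply: card_T.
rewrite sum_nat_const card_prod card_ord card_bool -mulnA.
have h : 0 < 2 ^ m.+1 by rewrite expn_gt0.
by rewrite -expnS subn1 prednK.
Qed.

Lemma natpow_expn (a b : nat) : Nat.pow a b = expn a b.
Proof.
elim: b => [|b IH]; first by [].
by rewrite /= IH expnS.
Qed.

Lemma count_lb' m : (S m * Nat.pow 2 (Nat.pow 2 (S m)) <= num_delta_matroids (S (S m)))%coq_nat.
Proof.
apply/leP; rewrite !natpow_expn; exact: count_lb m.
Qed.
End Helpers.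

Open Scope R_scope.

Theorem theorem2 :
  forall eps : R, 0 < eps ->
  exists n0 : nat, forall n : nat, (n0 <= n)%nat ->
    (1 - eps) * INR n * 2 ^ (2 ^ (n - 1))%nat <= INR (num_delta_matroids n).
Proof.
intros eps heps.
destruct (INR_unbounded (/ eps)) as [N hN].
exists (N + 2)%nat; intros n hn.
destruct n as [|[|m]]; try lia.
assert (hc := Helpers.count_lb' m).
apply le_INR in hc.
rewrite mult_INR, pow_INR in hc.
change (Nat.sub (S (S m)) 1) with (S m).
set (P := 2 ^ (Nat.pow 2 (S m))) in *.
assert (hP : 0 < P) by (apply pow_lt; lra).
change (INR 2) with 2 in hc.
fold P in hc.
assert (hNR : INR N <= INR (S (S m))) by (apply le_INR; lia).
assert (h1 : 1 <= eps * INR (S (S m))).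
{ assert (h : / eps < INR (S (S m))) by lra.
  pose proof (Rmult_lt_compat_l eps _ _ heps h) as h'.
  rewrite Rinv_r in h'; lra. }
assert (hm : INR (S (S m)) = INR (S m) + 1) by (rewrite S_INR; reflexivity).
assert (h3 : (1 - eps) * INR (S (S m)) <= INR (S m)) by lra.
pose proof (Rmult_le_compat_r P _ _ (Rlt_le _ _ hP) h3).
lra.
Qed.
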